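(* Let $G$ be a graph whose odd girth is $5$. If $E(G)=E_1\cup E_2$ with $E_1\cap E_2=\emptyset$, where $(V(G),E_1)$ is bipartite and $E_2$ is a matching, then $G$ admits an orientation in which every $5$-cycle of $G$ is alternating.
   Context: The odd girth of a graph is the length of its shortest odd cycle. An orientation assigns each edge exactly one direction. In an oriented graph, a subgraph that is a cycle is called alternating if at most one of its vertices has both positive in-degree and positive out-degree within that cycle (all others are sources or sinks of the cycle). *)

(* Defs.v *)
From mathcomp Require Import all_boot.
Set Implicit Arguments. Unset Strict Implicit. Unset Printing Implicit Defensive.

Definition simple_graph (V : finType) (e : rel V) : Prop :=
  symmetric e /\ irreflexive e.

Definition is_cycle (V : finType) (e : rel V) (k : nat) (c : 'I_k -> V) : Prop :=
  3 <= k /\ injective c /\ forall i : 'I_k, e (c i) (c (ordS i)).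

Definition odd_girth (V : finType) (e : rel V) (g : nat) : Prop :=
  (odd g /\ exists c : 'I_g -> V, is_cycle e c) /\
  forall k, odd k -> k < g -> forall c : 'I_k -> V, ~ is_cycle e c.

Definition edge_partition (V : finType) (e E1 E2 : rel V) : Prop :=
  symmetric E1 /\ symmetric E2 /\
  (forall x y, e x y = E1 x y || E2 x y) /\
  (forall x y, ~~ (E1 x y && E2 x y)).

Definition bipartite (V : finType) (E : rel V) : Prop :=
  exists f : V -> bool, forall x y, E x y -> f x != f y.

Definition matching (V : finType) (E : rel V) : Prop :=
  forall x y z, E x y -> E x z -> y = z.

(* An orientation of e: o x y means edge xy is directed x -> y; each edge gets
   exactly one direction. *)
Definition orientation (V : finType) (e o : rel V) : Prop :=
  (forall x y, o x y -> e x y) /\ (forall x y, e x y -> o x y (+) o y x).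

Definition cycle_mixed (V : finType) (o : rel V) (k : nat) (c : 'I_k -> V)
  (i : 'I_k) : bool :=
  (o (c (ord_pred i)) (c i) || o (c (ordS i)) (c i)) &&
  (o (c i) (c (ord_pred i)) || o (c i) (c (ordS i))).

(* Alternating: at most one vertex of the cycle is neither a source nor a sink. *)
Definition alternating (V : finType) (o : rel V) (k : nat) (c : 'I_k -> V) : Prop :=
  #|[pred i | cycle_mixed o c i]| <= 1.

(* Main.v *)
Require Import Defs.
From mathcomp Require Import all_boot.

Lemma enum5 : enum 'I_5 = map inord (iota 0 5).
Proof.
apply: (inj_map val_inj). rewrite val_enum_ord -map_comp.
by rewrite /= !inordK.
Qed.
Lemma card5 (M : pred 'I_5) : #|[pred i | M i]| =
  M (inord 0) + M (inord 1) + M (inord 2) + M (inord 3) + M (inord 4).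
Proof. by rewrite cardE /enum_mem size_filter -enumT enum5 /= !addnA addn0. Qed.
Lemma S0 : ordS (inord 0 : 'I_5) = inord 1. Proof. by apply/val_inj; rewrite /= !inordK. Qed.
Lemma S1 : ordS (inord 1 : 'I_5) = inord 2. Proof. by apply/val_inj; rewrite /= !inordK. Qed.
Lemma S2 : ordS (inord 2 : 'I_5) = inord 3. Proof. by apply/val_inj; rewrite /= !inordK. Qed.
Lemma S3 : ordS (inord 3 : 'I_5) = inord 4. Proof. by apply/val_inj; rewrite /= !inordK. Qed.
Lemma S4 : ordS (inord 4 : 'I_5) = inord 0. Proof. by apply/val_inj; rewrite /= !inordK. Qed.
Lemma P0 : ord_pred (inord 0 : 'I_5) = inord 4. Proof. by apply/val_inj; rewrite /= !inordK. Qed.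
Lemma P1 : ord_pred (inord 1 : 'I_5) = inord 0. Proof. by apply/val_inj; rewrite /= !inordK. Qed.
Lemma P2 : ord_pred (inord 2 : 'I_5) = inord 1. Proof. by apply/val_inj; rewrite /= !inordK. Qed.
Lemma P3 : ord_pred (inord 3 : 'I_5) = inord 2. Proof. by apply/val_inj; rewrite /= !inordK. Qed.
Lemma P4 : ord_pred (inord 4 : 'I_5) = inord 3. Proof. by apply/val_inj; rewrite /= !inordK. Qed.

Definition dd (b t : 'I_5 -> bool) (i : 'I_5) : bool :=
  if b i == b (ordS i) then t i else ~~ b i.

Lemma key (b t : 'I_5 -> bool) :
  (forall i, ~~ ((b i == b (ordS i)) && (b (ordS i) == b (ordS (ordS i))))) ->
  #|[pred i | dd b t (ord_pred i) == dd b t i]| <= 1.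
Proof.
move=> H; rewrite card5 /dd !(S0,S1,S2,S3,S4,P0,P1,P2,P3,P4).
have := H (inord 0); have := H (inord 1); have := H (inord 2);
have := H (inord 3); have := H (inord 4).
rewrite !(S0,S1,S2,S3,S4).
move: (b (inord 0)) (b (inord 1)) (b (inord 2)) (b (inord 3)) (b (inord 4))
  (t (inord 0)) (t (inord 1)) (t (inord 2)) (t (inord 3)) (t (inord 4)).
by do 10!case.
Qed.

Lemma ordSS_neq (i : 'I_5) : i != ordS (ordS i).
Proof. by case: i => [[|[|[|[|[|m]]]]] Hi]. Qed.

Theorem mainTheorem10 (V : finType) (e E1 E2 : rel V) :
  simple_graph e ->
  odd_girth e 5 ->
  edge_partition e E1 E2 ->
  bipartite E1 ->
  matching E2 ->
  exists o : rel V, orientation e o /\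
    forall c : 'I_5 -> V, is_cycle e c -> alternating o c.
Proof.
move=> [esym eirr] _ [E1s [E2s [eE E12]]] [f Hf] Hm.
pose o := fun x y : V => e x y &&
  (if f x == f y then enum_rank x < enum_rank y else ~~ f x).
have ox : forall x y, e x y -> o y x = ~~ o x y.
  move=> x y exy; rewrite /o esym exy /=.
  have nxy : x != y by apply: contraTneq exy => ->; rewrite eirr.
  rewrite eq_sym; case: eqP => [Efxy|Nf].
    have : enum_rank x != enum_rank y.
      by apply: contra nxy => /eqP /enum_rank_inj ->.
    by rewrite neq_ltn; case/orP=> H; rewrite H ltnNge (ltnW H).
  by move: Nf; case: (f x); case: (f y).
exists o; split.
  split; first by move=> x y /andP[].
  by move=> x y exy; rewrite (ox x y exy); case: (o x y).
move=> c [_ [cinj ce]].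
pose b := fun i => f (c i).
pose t := fun i => enum_rank (c i) < enum_rank (c (ordS i)).
have od : forall i, o (c i) (c (ordS i)) = dd b t i.
  by move=> i; rewrite /o ce /dd /b /t.
have mixedE : forall i, cycle_mixed o c i = (dd b t (ord_pred i) == dd b t i).
  move=> i; rewrite /cycle_mixed.
  have Hp : ordS (ord_pred i) = i.
    by apply/val_inj; case: i => [[|[|[|[|[|m]]]]] Hi].
  have e1 := od (ord_pred i); rewrite Hp in e1.
  rewrite e1 (ox _ _ (ce i)) od ox; last by rewrite -{2}Hp ce.
  rewrite e1.
  by case: (dd b t (ord_pred i)); case: (dd b t i).
rewrite /alternating.
rewrite (@eq_card _ _ [pred i | dd b t (ord_pred i) == dd b t i]); last first.
  by move=> i; rewrite !inE mixedE.
apply: key => i; apply/negP => /andP[/eqP h1 /eqP h2].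
have E2of : forall j, b j = b (ordS j) -> E2 (c j) (c (ordS j)).
  move=> j hj; have := ce j; rewrite eE; case/orP => // /Hf.
  by rewrite /b in hj; rewrite hj eqxx.
have a1 := E2of _ h1; have a2 := E2of _ h2.
rewrite E2s in a1.
have := Hm _ _ _ a1 a2 => /cinj /eqP.
by rewrite (negbTE (ordSS_neq i)).
Qed.
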